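(* Consider the networked Cournot game defined in the context, with market maker payoff $\pi^M\in\{W_{soc},W_{res},W_{con}\}$, and assume it is feasible. (i) If $\pi^M=W_{soc}$, then a Generalized Nash Equilibrium (GNE) exists. (ii) If $\pi^M=W_{res}$, then a GNE exists. (iii) If $\pi^M=W_{con}$, a GNE need not exist: there exist a network and parameters for which the game has no GNE. An example is the 2-node network with $a_1=a_2=10$, $b_1=1.2$, $b_2=1$, $c_1=c_2=1$ and line capacity $f_{12}=2$.
   Context: Network model. There are $n$ nodes and $\ell$ transmission lines. Let $H\in\mathbb{R}^{\ell\times n}$ be the shift-factor matrix of a connected power network under the linearized DC power-flow model; the flows on the lines are $-Hr$ when the vector of power injections is $-r$. Let $f\in\mathbb{R}^\ell_{+}$ be the vector of line capacities. Generators. At each node $k$ there is a generator $G_k$. It chooses a quantity $q_k\in S^G_k=\mathbb{R}_+$ and incurs cost $c_kq_k^2$, where $c_k>0$. Demand and prices. Demand at node $k$ has inverse demand $p_k(d)=a_k-b_kd$, where $a_k>0$ and $b_k\ge 0$. Market maker. A market maker $M$ chooses re-balancing quantities $r\in\mathbb{R}^n$ from $$S^M(q)=\{r\in\mathbb{R}^n: q+r\ge 0,\ |Hr|\le f,\ \mathbf{1}^\top r=0\},$$ where inequalities are elementwise. Node $k$ then receives $d_k=q_k+r_k$, and both demand and generator at node $k$ face the price $p_k(q_k+r_k)$. Payoffs. Generator $k$'s profit is $\pi^G_k(q,r)=q_kp_k(q_k+r_k)-c_kq_k^2$. The market maker's payoff $\pi^M$ is one of: - $W_{soc}(q,r)=\sum_k\big(\int_0^{q_k+r_k}p_k(w)\,dw-c_kq_k^2\big)$;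 - $W_{res}(q,r)=\sum_k\big(\int_0^{q_k+r_k}p_k(w)\,dw-q_kp_k(q_k+r_k)\big)$; - $W_{con}(q,r)=\sum_k\big(\int_0^{q_k+r_k}p_k(w)\,dw-(q_k+r_k)p_k(q_k+r_k)\big)$. Feasibility. The game is feasible if there exists $q\in\mathbb{R}^n_+$ with $S^M(q)\neq\emptyset$. GNE. A pair $(q^*,r^* )$ is a GNE if $r^*\in S^M(q^* )$ and both of the following hold: - for every $k$ and every $q_k\ge 0$, $\pi^G_k(q_k^*,q_{-k}^*,r^* )\ge\pi^G_k(q_k,q^*_{-k},r^* )$; - for every $r\in S^M(q^* )$, $\pi^M(q^*,r^* )\ge \pi^M(q^*,r)$. 2-node network. Nodes 1 and 2 are joined by a single line of capacity $f_{12}$. Writing $r_1=r$ and $r_2=-r$, the market maker's feasible set becomes $\{r: -q_1\le r\le q_2,\ -f_{12}\le r\le f_{12}\}$. *)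

(* Defs.v *)
From HB Require Import structures.
From mathcomp Require Import all_boot all_order all_algebra.
Set Implicit Arguments. Unset Strict Implicit. Unset Printing Implicit Defensive.
Import Order.TTheory GRing.Theory Num.Theory.
Local Open Scope ring_scope.

Section Cournot.
Variable R : rcfType.

Definition incidence (n l : nat) (fr to : 'I_l -> 'I_n) : 'M[R]_(l, n) :=
  \matrix_(e < l, k < n) (((k == fr e)%:R - (k == to e)%:R) : R).

Definition branch_mx (n l : nat) (fr to : 'I_l -> 'I_n) (beta : 'I_l -> R)
  : 'M[R]_(l, n) := \matrix_(e < l, k < n) (beta e * incidence fr to e k).

Definition laplacian (n l : nat) (fr to : 'I_l -> 'I_n) (beta : 'I_l -> R)
  : 'M[R]_n := (incidence fr to)^T *m branch_mx fr to beta.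

Definition adj (n l : nat) (fr to : 'I_l -> 'I_n) : rel 'I_n :=
  fun i j => [exists e : 'I_l, ((fr e == i) && (to e == j)) ||
                               ((fr e == j) && (to e == i))].

Definition connected_net (n l : nat) (fr to : 'I_l -> 'I_n) : Prop :=
  forall i j : 'I_n, connect (adj fr to) i j.

Definition unit_inj (n : nat) (k s : 'I_n) : 'cV[R]_n :=
  \col_(i < n) (((i == k)%:R - (i == s)%:R) : R).

(* H is the shift-factor (PTDF) matrix of a connected power network under the
   linearized DC power-flow model: there is a network (lines fr e -> to e,
   no self loops, positive susceptances beta, connected) and a reference
   (slack) node s such that column k of H is the vector of line flows
   produced by injecting one unit at node k and withdrawing it at s
   (voltage angles theta with theta_s = 0 and B theta = injection,
   flows = diag(beta) A theta). *)
Definition is_shift_factor (n l : nat) (H : 'M[R]_(l, n)) : Prop :=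
  exists (fr to : 'I_l -> 'I_n) (beta : 'I_l -> R) (s : 'I_n),
    [/\ (forall e, fr e != to e),
        (forall e, 0 < beta e),
        connected_net fr to &
        forall k : 'I_n, exists theta : 'cV[R]_n,
          [/\ theta s 0 = 0,
              laplacian fr to beta *m theta = unit_inj k s &
              col k H = branch_mx fr to beta *m theta]].

Variables (n l : nat).
Implicit Types (q r : 'cV[R]_n) (a b c : 'I_n -> R).

Definition price a b (k : 'I_n) (d : R) : R := a k - b k * d.

(* \int_0^d p_k(w) dw, written out in closed form for the affine p_k *)
Definition int_price a b (k : 'I_n) (d : R) : R := a k * d - b k * d ^+ 2 / 2%:R.

Definition SM (H : 'M[R]_(l, n)) (f : 'cV[R]_l) q r : Prop :=
  [/\ (forall k : 'I_n, 0 <= q k 0 + r k 0),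
      (forall e : 'I_l, `|(H *m r) e 0| <= f e 0) &
      \sum_(k < n) r k 0 = 0].

Definition profitG a b c (k : 'I_n) q r : R :=
  q k 0 * price a b k (q k 0 + r k 0) - c k * q k 0 ^+ 2.

Definition W_soc a b c q r : R :=
  \sum_(k < n) (int_price a b k (q k 0 + r k 0) - c k * q k 0 ^+ 2).
Definition W_res a b c q r : R :=
  \sum_(k < n) (int_price a b k (q k 0 + r k 0)
                - q k 0 * price a b k (q k 0 + r k 0)).
Definition W_con a b c q r : R :=
  \sum_(k < n) (int_price a b k (q k 0 + r k 0)
                - (q k 0 + r k 0) * price a b k (q k 0 + r k 0)).

Definition upd q (k : 'I_n) (x : R) : 'cV[R]_n :=
  \col_(i < n) (if i == k then x else q i 0).

Definition feasible (H : 'M[R]_(l, n)) (f : 'cV[R]_l) : Prop :=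
  exists q, (forall k, 0 <= q k 0) /\ exists r, SM H f q r.

Definition GNE (H : 'M[R]_(l, n)) (f : 'cV[R]_l) a b c
    (piM : 'cV[R]_n -> 'cV[R]_n -> R) q r : Prop :=
  [/\ (forall k, 0 <= q k 0),
      SM H f q r,
      (forall (k : 'I_n) (x : R), 0 <= x ->
          profitG a b c k (upd q k x) r <= profitG a b c k q r) &
      (forall r', SM H f q r' -> piM q r' <= piM q r)].

End Cournot.

(* Main.v *)
Require Import Defs.
From HB Require Import structures.
From mathcomp Require Import all_boot all_order all_algebra.
From mathcomp Require Import ring lra zify.
From Stdlib Require Import Classical.
Import Order.TTheory GRing.Theory Num.Theory.
Local Open Scope ring_scope.
Set Implicit Arguments. Unset Strict Implicit. Unset Printing Implicit Defensive.

Definition hasmax (T : Type) (K : realFieldType) (V : T -> K) (P : T -> Prop) :=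
  (exists x, P x) -> exists xs, P xs /\ forall y, P y -> V y <= V xs.

Lemma hasmax_or (T : Type) (K : realFieldType) (V : T -> K) (P Q : T -> Prop) :
  hasmax V P -> hasmax V Q -> hasmax V (fun x => P x \/ Q x).
Proof.
move=> HP HQ [x0 Hx0].
case: (classic (exists x, P x)) => [/HP [xp [Pxp Mp]]|nP];
case: (classic (exists x, Q x)) => [/HQ [xq [Qxq Mq]]|nQ].
- case: (lerP (V xp) (V xq)) => Hc.
  + exists xq; split; first by right.
    by move=> y [/Mp Hy|/Mq Hy] //; apply: le_trans Hc.
  + exists xp; split; first by left.
    by move=> y [/Mp Hy|/Mq Hy] //; apply: le_trans (ltW Hc).
- exists xp; split; first by left.
  by move=> y [/Mp //|Qy]; case: nQ; exists y.
- exists xq; split; first by right.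
  by move=> y [Py|/Mq //]; case: nP; exists y.
- by case: Hx0 => Hx; [case: nP|case: nQ]; exists x0.
Qed.

Lemma hasmax_ext (T : Type) (K : realFieldType) (V : T -> K) (P Q : T -> Prop) :
  (forall x, P x <-> Q x) -> hasmax V P -> hasmax V Q.
Proof.
move=> E HP [x Qx]; case: HP; first by exists x; apply/E.
by move=> xs [Pxs M]; exists xs; split; [apply/E|move=> y /E /M].
Qed.

Lemma hasmax_seq (T : Type) (K : realFieldType) (V : T -> K) (J : eqType)
  (Sub : J -> T -> Prop) (s : seq J) :
  (forall j, hasmax V (Sub j)) ->
  hasmax V (fun x => exists j, j \in s /\ Sub j x).
Proof.
move=> H; elim: s => [|j s IH].
  by move=> [x [j []]].
apply: (@hasmax_ext _ _ _ (fun x => Sub j x \/ exists j, j \in s /\ Sub j x)).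
  move=> x; split.
  - case=> [Hx|[j' [Hj' Hx]]]; first by exists j; rewrite mem_head.
    by exists j'; rewrite in_cons Hj' orbT.
  - case=> j' []; rewrite in_cons => /orP [/eqP ->|Hj'] Hx; [left|right; exists j'].
    by []. by [].
exact: hasmax_or.
Qed.

Lemma best_of (T : Type) (K : realFieldType) (V : T -> K) (J : finType)
  (Sub : J -> T -> Prop) (P : T -> Prop) :
  (forall j x, Sub j x -> P x) ->
  (forall j, hasmax V (Sub j)) ->
  (forall y, P y -> exists j z, Sub j z /\ V y <= V z) ->
  hasmax V P.
Proof.
move=> HS Hj Hc [y0 Py0].
have := @hasmax_seq T K V J Sub (enum J) Hj.
case.
  case: (Hc y0 Py0) => j [z [Hz _]]; exists z; exists j; split=> //.
  by rewrite mem_enum.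
move=> xs [[j [_ Hxs]] M]; exists xs; split; first exact: HS Hxs.
move=> y Py; case: (Hc y Py) => j' [z [Hz Hyz]]; apply: le_trans Hyz _.
by apply: M; exists j'; rewrite mem_enum.
Qed.

Definition inP (K : realFieldType) (N : nat) (I : finType) (u : I -> 'cV[K]_N)
  (h : I -> K) (x0 : 'rV[K]_N) (B : 'M[K]_N) (S : {set I}) (x : 'rV[K]_N) : Prop :=
  (x - x0 <= B)%MS /\ forall i, i \in S -> (x *m u i) 0 0 <= h i.

Definition bounded (K : realFieldType) (N : nat) (P : 'rV[K]_N -> Prop) :=
  exists M, forall x, P x -> forall j, `|x 0 j| <= M.

Lemma lin_mul (K : realFieldType) (N : nat) (y e : 'rV[K]_N) (w : 'cV[K]_N) t :
  ((y + t *: e) *m w) 0 0 = (y *m w) 0 0 + t * (e *m w) 0 0.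
Proof. by rewrite mulmxDl -scalemxAl !mxE. Qed.

Lemma subB_sub (K : fieldType) (N : nat) (x y : 'rV[K]_N) (B : 'M[K]_N) :
  (x <= B)%MS -> (y <= B)%MS -> (x - y <= B)%MS.
Proof. by move=> Hx Hy; apply: addmx_sub => //; rewrite eqmx_opp. Qed.

Lemma inA_move (K : realFieldType) (N : nat) (x0 y e : 'rV[K]_N) (B : 'M[K]_N) t :
  (y - x0 <= B)%MS -> (e <= B)%MS -> (y + t *: e - x0 <= B)%MS.
Proof.
move=> Hy He; have -> : y + t *: e - x0 = (y - x0) + t *: e by rewrite addrAC.
by apply: addmx_sub => //; apply: scalemx_sub.
Qed.

Lemma exit_pt (K : realFieldType) (N : nat) (I : finType) (u : I -> 'cV[K]_N)
  (h : I -> K) x0 B S y e T :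
  inP u h x0 B S y -> (e <= B)%MS -> 0 <= T -> ~ inP u h x0 B S (y + T *: e) ->
  exists i t, [/\ i \in S, 0 <= t <= T, inP u h x0 B S (y + t *: e) &
                 ((y + t *: e) *m u i) 0 0 = h i].
Proof.
move=> [HyA HyS] He HT Hout.
pose Y i := (y *m u i) 0 0; pose D i := (e *m u i) 0 0.
pose viol i := (i \in S) && (h i < Y i + T * D i).
have [i0 Hi0] : exists i, viol i.
  case: (pickP viol) => [i Hi|Hn]; first by exists i.
  case: Hout; split; first exact: inA_move.
  move=> i iS; rewrite lin_mul; move: (Hn i); rewrite /viol iS /= => /negbT.
  by rewrite -leNgt.
have violP i : viol i -> [/\ i \in S, Y i <= h i, 0 < D i & 0 < T].
  case/andP=> iS Hlt; have Hy := HyS i iS; rewrite -/(Y i) in Hy.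
  have HTD : 0 < T * D i by lra.
  split=> //.
    by case: (lerP (D i) 0) => // HD; nra.
  case: (lerP T 0) => // HT0; have T0 : T = 0 by lra.
  by move: HTD; rewrite T0 mul0r ltxx.
pose root i := (h i - Y i) / D i.
case: (arg_minP root Hi0) => i1 Hi1 Hmin.
have [i1S Yi1 Di1 T0] := violP i1 Hi1.
have rootP i : viol i -> 0 <= root i < T.
  move=> Hv; have [iS Yi Di _] := violP i Hv; move: Hv => /andP [_ Hlt].
  rewrite /root ler_pdivlMr // ltr_pdivrMr // mul0r; lra.
have [r0 r1] := andP (rootP i1 Hi1).
exists i1, (root i1); split=> //; first by rewrite r0 ltW.
- split; first exact: inA_move.
  move=> j jS; rewrite lin_mul -/(Y j) -/(D j).
  case Hvj: (viol j).
    have [_ Yj Dj _] := violP j Hvj; have := Hmin j Hvj.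
    rewrite /root ler_pdivlMr // => Hr.
    lra.
  move: Hvj; rewrite /viol jS /= => /negbT; rewrite -leNgt => HjT.
  have Yj : Y j <= h j by apply: HyS.
  have : (Y j + root i1 * D j - h j) * T = (T - root i1) * (Y j - h j) + root i1 * (Y j + T * D j - h j) by ring.
  move=> E.
  have : (Y j + root i1 * D j - h j) * T <= 0 by rewrite E; nra.
  by rewrite pmulr_lle0 // subr_le0.
- rewrite lin_mul -/(Y i1) -/(D i1) /root; field; lra.
Qed.

Lemma mx11_sub0 (K : realFieldType) (N : nat) (x x1 : 'rV[K]_N) (w : 'cV[K]_N) :
  ((x - x1) *m w = 0) <-> ((x *m w) 0 0 = (x1 *m w) 0 0).
Proof.
rewrite mulmxBl; split.
  by move/matrixP => /(_ 0 0); rewrite !mxE => /eqP; rewrite subr_eq0 => /eqP.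
by move=> E; rewrite [x *m w]mx11_scalar [x1 *m w]mx11_scalar E subrr.
Qed.

Lemma inP_cut (K : realFieldType) (N : nat) (I : finType) (u : I -> 'cV[K]_N)
  (h : I -> K) x0 B S (S' : {set I}) (w : 'cV[K]_N) v x1 :
  inP u h x0 B S x1 -> (x1 *m w) 0 0 = v -> {subset S' <= S} ->
  (forall i, i \in S -> i \notin S' -> forall x : 'rV[K]_N, (x *m w) 0 0 = v -> (x *m u i) 0 0 <= h i) ->
  forall x : 'rV[K]_N, (inP u h x0 B S x /\ (x *m w) 0 0 = v) <-> inP u h x1 (B :&: kermx w)%MS S' x.
Proof.
move=> [H1A H1S] H1w HSS' Hi x; split.
  move=> [[HA HS] Hw]; split.
    rewrite sub_capmx; apply/andP; split.
      have -> : x - x1 = (x - x0) - (x1 - x0) by rewrite opprB addrA subrK.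
      exact: subB_sub.
    by apply/sub_kermxP/mx11_sub0; rewrite Hw H1w.
  by move=> i /HSS' /HS.
move=> [HA HS']; move: HA; rewrite sub_capmx => /andP [HB /sub_kermxP /mx11_sub0 Hw].
rewrite H1w in Hw; split=> //; split.
  have -> : x - x0 = (x - x1) + (x1 - x0) by rewrite addrA subrK.
  exact: addmx_sub.
move=> i iS; case iS': (i \in S'); first exact: HS'.
by apply: Hi => //; rewrite iS'.
Qed.

Lemma qp_rank0 (K : realFieldType) (N : nat) (I : finType) (u : I -> 'cV[K]_N)
  (h : I -> K) (V : 'rV[K]_N -> K) x0 (B : 'M[K]_N) S :
  B = 0 -> hasmax V (inP u h x0 B S).
Proof.
move=> -> [y0 Hy0]; exists y0; split=> //; case: Hy0 => Hy0 _.
have E y : (y - x0 <= (0 : 'M[K]_N))%MS -> y = x0.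
  by rewrite submx0 subr_eq0 => /eqP.
move=> y [Hy _]; by rewrite (E _ Hy) (E _ Hy0).
Qed.

Lemma qp_main (K : realFieldType) (N : nat) (I : finType) (u : I -> 'cV[K]_N) (h : I -> K)
  (V : 'rV[K]_N -> K) (sl : 'rV[K]_N -> 'rV[K]_N -> K) (cv : 'rV[K]_N -> K) :
  (forall y d t, V (y + t *: d) = V y + t * sl y d - t ^+ 2 * cv d) ->
  (forall d, 0 <= cv d) ->
  (forall d, exists w : 'cV[K]_N, forall y, sl y d = (y *m w) 0 0 + sl 0 d) ->
  forall k (S : {set I}) (B : 'M[K]_N) x0, (#|S| + \rank B <= k)%N ->
  bounded (inP u h x0 B S) -> hasmax V (inP u h x0 B S).
Proof.
move=> HV Hcv Hsl.
have sl_shift y d s : sl (y + s *: d) d = sl y d - 2 * s * cv d.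
  have E1 := HV (y + s *: d) d 1.
  have Eq : y + s *: d + 1 *: d = y + (s + 1) *: d by rewrite -addrA -scalerDl.
  rewrite Eq HV HV in E1.
  lra.
elim=> [|k IH] S B x0 Hk Hb.
  apply: qp_rank0; apply/eqP; rewrite -mxrank_eq0.
  by move: Hk; rewrite leqn0 addn_eq0 => /andP [_].
case: (boolP (\rank B == 0%N)) => [|HrB].
  by rewrite mxrank_eq0 => /eqP; apply: qp_rank0.
have [d0 [Hd0B Hd0]] : exists d : 'rV[K]_N, (d <= B)%MS /\ d != 0.
  case: (pickP (fun i => row i B != 0)) => [i Hi|Hn].
    by exists (row i B); rewrite row_sub.
  case/negP: HrB; rewrite mxrank_eq0; apply/eqP/row_matrixP => i.
  by move: (Hn i) => /negbFE /eqP ->; rewrite row0.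
have Hfac i : hasmax V (fun x => i \in S /\ inP u h x0 B S x /\ (x *m u i) 0 0 = h i).
  move=> [x1 [iS [Hx1 Hx1i]]].
  have E := @inP_cut K N I u h x0 B S (S :\ i) (u i) (h i) x1 Hx1 Hx1i.
  have sub : {subset S :\ i <= S} by move=> j; rewrite in_setD1 => /andP [_ ->].
  have E' := E sub.
  have E'' : forall x, (inP u h x0 B S x /\ (x *m u i) 0 0 = h i) <->
                       inP u h x1 (B :&: kermx (u i))%MS (S :\ i) x.
    apply: E' => j jS; rewrite in_setD1 jS andbT negbK => /eqP -> x ->.
    exact: le_refl.
  apply: (@hasmax_ext _ _ _ (inP u h x1 (B :&: kermx (u i))%MS (S :\ i))).
    move=> x; split; first by move/E''=> ?; split.
    by move=> [_ Hx]; apply/E''.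
  apply: IH.
  - have := cardsD1 i S; rewrite iS => HS.
    have := mxrankS (capmxSl B (kermx (u i))).
    move: Hk; rewrite HS; lia.
  - case: Hb => M HM; exists M => x Hx.
    by have [Hx' _] := proj2 (E'' x) Hx; apply: HM.
  - by exists x1.
have Hfar y e : inP u h x0 B S y -> e != 0 -> exists T, 0 <= T /\ ~ inP u h x0 B S (y + T *: e).
  move=> Hy He0.
  have [j Hj] : exists j, e 0 j != 0.
    case: (pickP (fun j => e 0 j != 0)) => [j ?|Hn]; first by exists j.
    case/negP: He0; apply/eqP/rowP => j; rewrite mxE.
    by move: (Hn j) => /negbFE /eqP.
  case: Hb => M HM.
  have HyM := HM y Hy j.
  have Hej : 0 < `|e 0 j| by rewrite normr_gt0.
  pose T := (M + `|y 0 j| + 1) / `|e 0 j|.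
  have T0 : 0 <= T by rewrite /T divr_ge0 // ?ltW //; have := normr_ge0 (y 0 j); lra.
  exists T; split=> // /HM /(_ j); rewrite !mxE => Hc.
  have HTe : `|T * e 0 j| = M + `|y 0 j| + 1.
    by rewrite normrM (ger0_norm T0) /T divfK // gt_eqF.
  have := ler_normD (y 0 j + T * e 0 j) (- y 0 j).
  rewrite normrN addrC addKr HTe; lra.
case: (classic (exists d : 'rV[K]_N, (d <= B)%MS /\ d != 0 /\ cv d = 0)).
  move=> [d [HdB [Hd Hcd]]].
  apply: (@best_of _ _ V (option I)
     (fun j x => match j with Some i => i \in S /\ inP u h x0 B S x /\ (x *m u i) 0 0 = h i
                 | None => False end)).
  - by move=> [i|] x // [_ []].
  - by case=> [i|]; [exact: Hfac|move=> [x []]].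
  move=> y Hy.
  pose e := if 0 <= sl y d then d else - d.
  have HeB : (e <= B)%MS by rewrite /e; case: ifP => _ //; rewrite eqmx_opp.
  have He0 : e != 0 by rewrite /e; case: ifP => _ //; rewrite oppr_eq0.
  have HVe t : 0 <= t -> V y <= V (y + t *: e).
    move=> t0; rewrite /e; case: ifP => Hs.
      rewrite HV Hcd mulr0 subr0; have := mulr_ge0 t0 Hs; lra.
    rewrite scalerN -scaleNr HV Hcd mulr0 subr0.
    move: Hs => /negbT; rewrite -ltNge => Hs; nra.
  have [T [T0 Hout]] := Hfar y e Hy He0.
  case: (exit_pt Hy HeB T0 Hout) => i [t [iS /andP [t0 tT] Hz Hzi]].
  by exists (Some i), (y + t *: e); split; [split; [|split]|exact: HVe].
move=> Hnb.
have Hcv0 : 0 < cv d0.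
  rewrite lt_def Hcv andbT; apply/negP => /eqP Hc; apply: Hnb; exists d0.
  by do 2 split=> //.
case: (Hsl d0) => w Hw.
have Hd0w : (d0 *m w) 0 0 = - (2 * cv d0).
  have := sl_shift 0 d0 1; rewrite add0r scale1r Hw; lra.
have HA : hasmax V (fun x => inP u h x0 B S x /\ (x *m w) 0 0 = - sl 0 d0).
  move=> [x1 [Hx1 Hx1w]].
  have E := @inP_cut K N I u h x0 B S S w (- sl 0 d0) x1 Hx1 Hx1w (fun j jS => jS).
  have E' : forall x, (inP u h x0 B S x /\ (x *m w) 0 0 = - sl 0 d0) <->
                       inP u h x1 (B :&: kermx w)%MS S x.
    by apply: E => j ->.
  apply: (@hasmax_ext _ _ _ (inP u h x1 (B :&: kermx w)%MS S)).
    by move=> x; split; [move/E'|move/E'].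
  apply: IH.
  - have : (\rank (B :&: kermx w)%MS < \rank B)%N.
      apply: rank_ltmx; rewrite ltmxE capmxSl /=; apply/negP => HBk.
      have := submx_trans Hd0B (submx_trans HBk (capmxSr B (kermx w))).
      move/sub_kermxP/matrixP/(_ 0 0); rewrite Hd0w mxE => Hc.
      lra.
    move: Hk; lia.
  - case: Hb => M HM; exists M => x Hx.
    by have [Hx' _] := proj2 (E' x) Hx; apply: HM.
  - by exists x1.
apply: (@best_of _ _ V (option I)
   (fun j x => match j with Some i => i \in S /\ inP u h x0 B S x /\ (x *m u i) 0 0 = h i
               | None => inP u h x0 B S x /\ (x *m w) 0 0 = - sl 0 d0 end)).
- by move=> [i|] x [] // _ [].
- by case=> [i|]; [exact: Hfac|exact: HA].
move=> y Hy.
pose tau := sl y d0 / (2 * cv d0).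
pose e := tau *: d0.
have HeB : (e <= B)%MS by apply: scalemx_sub.
have HVe t : 0 <= t <= 1 -> V y <= V (y + t *: e).
  case/andP=> t0 t1; rewrite /e scalerA HV.
  have Hs : sl y d0 = 2 * tau * cv d0 by rewrite /tau; field; lra.
  rewrite Hs.
  have : 0 <= tau ^+ 2 * cv d0 * (t * (2 - t)).
    by apply: mulr_ge0; [apply: mulr_ge0; [apply: sqr_ge0|exact: ltW]|nra].
  nra.
case: (classic (inP u h x0 B S (y + 1 *: e))) => Hin.
  exists None, (y + 1 *: e); split; last by apply: HVe; rewrite ler01 lexx.
  split=> //.
  have := Hw (y + 1 *: e); rewrite scale1r /e sl_shift /tau.
  have -> : sl y d0 - 2 * (sl y d0 / (2 * cv d0)) * cv d0 = 0 by field; lra.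
  lra.
have T0 : (0 : K) <= 1 by [].
case: (exit_pt Hy HeB T0 Hin) => i [t [iS /andP [t0 tT] Hz Hzi]].
by exists (Some i), (y + t *: e); split; [split; [|split]|apply: HVe; rewrite t0 tT].
Qed.


Definition sepq (K : realFieldType) (n : nat) (al be ga : 'I_n -> K) (x : 'rV[K]_n) : K :=
  \sum_k (al k * x 0 k - be k * x 0 k ^+ 2 / 2%:R + ga k).

Lemma mulmx_col (K : realFieldType) (n : nat) (x : 'rV[K]_n) (F : 'I_n -> K) :
  (x *m \col_j F j) 0 0 = \sum_j x 0 j * F j.
Proof. by rewrite mxE; apply: eq_bigr => j _; rewrite mxE. Qed.

Lemma sepq_max (K : realFieldType) (n : nat) (I : finType) (u : I -> 'cV[K]_n) (h : I -> K)
  (al be ga : 'I_n -> K) :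
  (forall k, 0 <= be k) ->
  bounded (inP u h 0 1%:M setT) -> hasmax (sepq al be ga) (inP u h 0 1%:M setT).
Proof.
move=> Hbe Hb.
pose sl (y d : 'rV[K]_n) := \sum_k (al k * d 0 k - be k * y 0 k * d 0 k).
pose cv (d : 'rV[K]_n) := \sum_k (be k * d 0 k ^+ 2 / 2%:R).
apply: (@qp_main K n I u h _ sl cv _ _ _ (#|I| + n)%N) => //.
- move=> y d t; rewrite /sepq /sl /cv !mulr_sumr -big_split -sumrB /=.
  apply: eq_bigr => k _; rewrite !mxE.
  by field.
- move=> d; apply: sumr_ge0 => k _; apply: mulr_ge0; last by rewrite invr_ge0 ler0n.
  by apply: mulr_ge0 => //; apply: sqr_ge0.
- move=> d; exists (\col_k (- be k * d 0 k)) => y.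
  rewrite mulmx_col /sl -big_split /=; apply: eq_bigr => k _; rewrite mxE; ring.
- by rewrite cardsT mxrank1.
Qed.

Definition Tset (K : realFieldType) (n l : nat) (H : 'M[K]_(l, n)) (f : 'cV[K]_l)
  (th : 'I_n -> K) (x : 'rV[K]_n) : Prop :=
  [/\ forall k, th k <= x 0 k, \sum_k x 0 k = 0 &
      forall e, `|\sum_j H e j * x 0 j| <= f e 0].

Definition Piece (K : realFieldType) (n : nat) (ka : 'I_n -> K) (s : {ffun 'I_n -> bool})
  (x : 'rV[K]_n) : Prop :=
  forall k, if s k then ka k <= x 0 k else x 0 k <= ka k.

Definition sgn (K : realFieldType) (b : bool) : K := if b then 1 else -1.

Definition cu (K : realFieldType) (n l : nat) (H : 'M[K]_(l, n))
  (s : {ffun 'I_n -> bool}) (i : (('I_n + bool) + ('I_l * bool)) + 'I_n) : 'cV[K]_n :=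
  match i with
  | inl (inl (inl k)) => \col_j (- (j == k)%:R)
  | inl (inl (inr b)) => \col_j (sgn K b)
  | inl (inr (e, b)) => \col_j (sgn K b * H e j)
  | inr k => \col_j (- sgn K (s k) * (j == k)%:R)
  end.

Definition ch (K : realFieldType) (n l : nat) (f : 'cV[K]_l) (th ka : 'I_n -> K)
  (s : {ffun 'I_n -> bool}) (i : (('I_n + bool) + ('I_l * bool)) + 'I_n) : K :=
  match i with
  | inl (inl (inl k)) => - th k
  | inl (inl (inr b)) => 0
  | inl (inr (e, b)) => f e 0
  | inr k => - sgn K (s k) * ka k
  end.

Lemma sum_delta (K : realFieldType) (n : nat) (x : 'rV[K]_n) (k : 'I_n) :
  \sum_j x 0 j * (j == k)%:R = x 0 k.
Proof.
rewrite (bigD1 k) //= eqxx mulr1 big1 ?addr0 // => j /negbTE ->; by rewrite mulr0.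
Qed.

Lemma cu_val (K : realFieldType) (n l : nat) (H : 'M[K]_(l, n))
  (s : {ffun 'I_n -> bool}) (x : 'rV[K]_n) i :
  (x *m cu H s i) 0 0 =
  match i with
  | inl (inl (inl k)) => - x 0 k
  | inl (inl (inr b)) => sgn K b * \sum_k x 0 k
  | inl (inr (e, b)) => sgn K b * \sum_j H e j * x 0 j
  | inr k => - sgn K (s k) * x 0 k
  end.
Proof.
case: i => [[[k|b]|[e b]]|k]; rewrite /= mulmx_col.
- by rewrite -(sum_delta x k) -sumrN; apply: eq_bigr => j _; rewrite mulrN.
- by rewrite mulr_sumr; apply: eq_bigr => j _; rewrite mulrC.
- by rewrite mulr_sumr; apply: eq_bigr => j _; ring.
- by rewrite -(sum_delta x k) mulr_sumr; apply: eq_bigr => j _; ring.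
Qed.

Lemma inP_T (K : realFieldType) (n l : nat) (H : 'M[K]_(l, n)) (f : 'cV[K]_l)
  (th ka : 'I_n -> K) (s : {ffun 'I_n -> bool}) (x : 'rV[K]_n) :
  inP (cu H s) (ch f th ka s) 0 1%:M setT x <-> Tset H f th x /\ Piece ka s x.
Proof.
rewrite /inP; split.
  move=> [_ Hc]; split; first split.
  - by move=> k; have := Hc (inl (inl (inl k))) (in_setT _); rewrite cu_val /=; lra.
  - have := Hc (inl (inl (inr true))) (in_setT _);
    have := Hc (inl (inl (inr false))) (in_setT _); rewrite !cu_val /= /sgn; lra.
  - move=> e; have := Hc (inl (inr (e, true))) (in_setT _);
    have := Hc (inl (inr (e, false))) (in_setT _); rewrite !cu_val /= /sgn => H1 H2.
    rewrite ler_norml; lra.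
  - move=> k; have := Hc (inr k) (in_setT _); rewrite cu_val /= /sgn.
    case: (s k); lra.
move=> [[Hth Hs Hf] Hp]; split; first exact: submx1.
move=> [[[k|b]|[e b]]|k] _; rewrite cu_val /=.
- have := Hth k; lra.
- by rewrite Hs mulr0.
- have := Hf e; rewrite ler_norml /sgn => /andP [H1 H2]; case: b; lra.
- have := Hp k; rewrite /sgn; case: (s k); lra.
Qed.

Lemma hasmax_fun (T : Type) (K : realFieldType) (V W : T -> K) (P : T -> Prop) :
  (forall x, P x -> V x = W x) -> hasmax W P -> hasmax V P.
Proof.
move=> E HW Hn; case: (HW Hn) => xs [Pxs M]; exists xs; split=> // y Py.
by rewrite !E //; apply: M.
Qed.

Lemma T_bounded (K : realFieldType) (n l : nat) (H : 'M[K]_(l, n)) (f : 'cV[K]_l)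
  (th : 'I_n -> K) (x : 'rV[K]_n) :
  (forall k, th k <= 0) -> Tset H f th x -> forall j, `|x 0 j| <= - \sum_k th k.
Proof.
move=> Hth [Hx Hs _] j.
have E1 : \sum_k (x 0 k - th k) = - \sum_k th k by rewrite sumrB Hs sub0r.
have E2 : x 0 j - th j <= \sum_k (x 0 k - th k).
  rewrite (bigD1 j) //= lerDl; apply: sumr_ge0 => k _; have := Hx k; lra.
have E3 : \sum_k th k <= th j.
  rewrite (bigD1 j) //= gerDl; apply: sumr_le0 => k _; exact: Hth.
have := Hx j; have := Hth j; rewrite ler_norml; lra.
Qed.

Lemma T_max (K : realFieldType) (n l : nat) (H : 'M[K]_(l, n)) (f : 'cV[K]_l)
  (th ka al1 be1 ga1 al2 be2 ga2 : 'I_n -> K) (V : 'rV[K]_n -> K) :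
  (forall k, th k <= 0) -> (forall e, 0 <= f e 0) ->
  (forall k, 0 <= be1 k) -> (forall k, 0 <= be2 k) ->
  (forall s x, Piece ka s x -> V x =
     sepq (fun k => if s k then al2 k else al1 k) (fun k => if s k then be2 k else be1 k)
          (fun k => if s k then ga2 k else ga1 k) x) ->
  exists xs, Tset H f th xs /\ forall y, Tset H f th y -> V y <= V xs.
Proof.
move=> Hth Hf Hb1 Hb2 HV.
have T0 : Tset H f th 0.
  split.
  - by move=> k; rewrite mxE.
  - by apply: big1 => k _; rewrite mxE.
  - move=> e; rewrite big1 ?normr0 // => j _; by rewrite mxE mulr0.
have : hasmax V (Tset H f th).
  apply: (@best_of _ _ V {ffun 'I_n -> bool} (fun s x => Tset H f th x /\ Piece ka s x)).
  - by move=> s x [].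
  - move=> s; apply: hasmax_fun; first by move=> x [_ Hp]; apply: HV.
    apply: (@hasmax_ext _ _ _ (inP (cu H s) (ch f th ka s) 0 1%:M setT)).
      by move=> x; rewrite inP_T.
    apply: sepq_max; first by move=> k; case: (s k).
    exists (- \sum_k th k) => x Hx; have [Tx _] := proj1 (inP_T H f th ka s x) Hx; exact: (T_bounded Hth Tx).
  - move=> y Ty; exists [ffun k => ka k <= y 0 k], y; split=> //; split=> // k.
    by rewrite ffunE; case: lerP => // /ltW.
by case/(_ (ex_intro _ 0 T0)) => xs [Txs M]; exists xs.
Qed.



Definition BR (K : realFieldType) (a b c r : K) : K :=
  Num.max 0 ((a - b * r) / (2%:R * (b + c))).
Definition thv (K : realFieldType) (a b c : K) : K := - (a / (b + 2%:R * c)).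

Lemma BR_ge0 (K : realFieldType) (a b c r : K) : 0 <= BR a b c r.
Proof. by rewrite /BR le_max lexx. Qed.

Lemma BR_best (K : realFieldType) (a b c r x : K) : 0 <= b -> 0 < c -> 0 <= x ->
  x * (a - b * (x + r)) - c * x ^+ 2 <=
  BR a b c r * (a - b * (BR a b c r + r)) - c * BR a b c r ^+ 2.
Proof.
move=> b0 c0 x0; have D0 : 0 < 2%:R * (b + c) by lra.
rewrite /BR; case: (lerP 0 (a - b * r)) => Hs.
  have -> : Num.max 0 ((a - b * r) / (2%:R * (b + c))) = (a - b * r) / (2%:R * (b + c)).
    by apply/max_idPr; apply: divr_ge0 => //; apply: ltW.
  set q := (a - b * r) / (2%:R * (b + c)).
  have Hq : q * (2%:R * (b + c)) = a - b * r by rewrite /q divfK // gt_eqF.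
  have : 0 <= (b + c) * (x - q) ^+ 2 by apply: mulr_ge0; [lra|apply: sqr_ge0].
  nra.
have -> : Num.max 0 ((a - b * r) / (2%:R * (b + c))) = 0.
  by apply/max_idPl; rewrite pmulr_lle0 ?invr_gt0 // ltW.
nra.
Qed.

Lemma BR_th (K : realFieldType) (a b c r : K) : 0 < a -> 0 <= b -> 0 < c ->
  thv a b c <= r -> thv a b c <= - BR a b c r.
Proof.
move=> a0 b0 c0; rewrite /thv /BR => Hr.
have E0 : 0 < b + 2%:R * c by lra.
have D0 : 0 < 2%:R * (b + c) by lra.
rewrite lerN2; case: (lerP 0 ((a - b * r) / (2%:R * (b + c)))) => Hs.
  rewrite ler_pdivrMr // mulrAC ler_pdivlMr //.
  have : - a <= r * (b + 2%:R * c).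
    by move: Hr; rewrite lerNl ler_pdivlMr //; lra.
  nra.
by rewrite divr_ge0 // ltW.
Qed.

Lemma BR_pos (K : realFieldType) (a b c r : K) : 0 < a -> 0 <= b -> 0 < c ->
  thv a b c <= r -> 0 <= BR a b c r + r.
Proof.
move=> a0 b0 c0 Hr; case: (lerP 0 r) => r0.
  by apply: addr_ge0 => //; apply: BR_ge0.
have E0 : 0 < b + 2%:R * c by lra.
have D0 : 0 < 2%:R * (b + c) by lra.
have Hs : 0 <= (a - b * r) / (2%:R * (b + c)) by apply: divr_ge0; nra; lra.
rewrite /BR (max_idPr Hs).
have : - a <= r * (b + 2%:R * c).
  by move: Hr; rewrite /thv lerNl ler_pdivlMr //; lra.
move=> H; rewrite -(@ler_pM2r _ (2%:R * (b + c))) // mul0r mulrDl divfK ?gt_eqF //.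
nra.
Qed.

Definition uf (K : realFieldType) (a b d : K) : K := a * d - b * d ^+ 2 / 2%:R.
Definition al1 (K : realFieldType) (a b c : K) : K := a * (b + 2%:R * c) / (2%:R * (b + c)).
Definition be1 (K : realFieldType) (a b c : K) : K := b * (b + 2%:R * c) / (2%:R * (b + c)).
Definition kap (K : realFieldType) (a b : K) : K := a / b.
Definition v1 (K : realFieldType) (a b c s : K) : K :=
  al1 a b c * s - be1 a b c * s ^+ 2 / 2%:R + 0.
Definition ga2 (K : realFieldType) (a b c : K) : K :=
  v1 a b c (kap a b) - (a * kap a b - b * kap a b ^+ 2 / 2%:R).
Definition v2 (K : realFieldType) (a b c s : K) : K :=
  a * s - b * s ^+ 2 / 2%:R + ga2 a b c.
Definition vfun (K : realFieldType) (a b c s : K) : K :=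
  if s <= kap a b then v1 a b c s else v2 a b c s.

Lemma v12 (K : realFieldType) (a b c : K) : v1 a b c (kap a b) = v2 a b c (kap a b).
Proof. rewrite /v2 /ga2; ring. Qed.

Lemma key (K : realFieldType) (a b c r s : K) : 0 < a -> 0 <= b -> 0 < c ->
  uf a b (BR a b c r + s) - vfun a b c s <= uf a b (BR a b c r + r) - vfun a b c r.
Proof.
move=> a0 b0 c0; have D0 : 0 < 2%:R * (b + c) by lra.
have Dn : 2%:R * (b + c) != 0 by rewrite gt_eqF.
case: (lerP b 0) => bz.
  have -> : b = 0 by lra.
  have Ek : kap a 0 = 0 by rewrite /kap invr0 mulr0.
  have E1 s' : vfun a 0 c s' = a * s'.
    rewrite /vfun /v2 /ga2 /v1 /al1 /be1 Ek; case: ifP => _; field; rewrite ?gt_eqF //; lra.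
  rewrite !E1 /uf; lra.
have bn : b != 0 by rewrite gt_eqF.
set k := kap a b.
have Hbk : b * k = a by rewrite /k /kap mulrC divfK.
have I1 r' s' : r' <= k ->
  uf a b ((a - b * r') / (2%:R * (b + c)) + s') - v1 a b c s' -
  (uf a b ((a - b * r') / (2%:R * (b + c)) + r') - v1 a b c r') =
  - (b ^+ 2 / (2%:R * (b + c))) * (s' - r') ^+ 2 / 2%:R.
  move=> _; rewrite /uf /v1 /al1 /be1; field; rewrite ?gt_eqF //; lra.
have I2 q s' : uf a b (q + s') - v2 a b c s' - (uf a b (q + k) - v2 a b c k) = - (b * q) * (s' - k).
  by rewrite /uf /v2; field.
have Hc : 0 <= b ^+ 2 / (2%:R * (b + c)) by apply: divr_ge0; [apply: sqr_ge0|lra].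
case: (lerP r k) => rk.
  have Hq : BR a b c r = (a - b * r) / (2%:R * (b + c)).
    rewrite /BR; apply/max_idPr; apply: divr_ge0; last by lra.
    by rewrite subr_ge0 -Hbk; rewrite ler_pM2l.
  have q0 : 0 <= BR a b c r by apply: BR_ge0.
  rewrite /vfun -/k rk Hq; case: ifP => sk.
    have := I1 r s rk; have := sqr_ge0 (s - r); nra.
  move/negbT: sk; rewrite -ltNge => sk.
  have A := I2 ((a - b * r) / (2%:R * (b + c))) s.
  have B := I1 r k rk; rewrite v12 in B.
  rewrite -Hq -/k in A B q0 *.
  have P1 : 0 <= b * BR a b c r * (s - k).
    by apply: mulr_ge0; [apply: mulr_ge0; lra|lra].
  have P2 : 0 <= b ^+ 2 / (2%:R * (b + c)) * (k - r) ^+ 2.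
    by apply: mulr_ge0 => //; apply: sqr_ge0.
  lra.
have Hq : BR a b c r = 0.
  rewrite /BR; apply/max_idPl; rewrite pmulr_lle0 ?invr_gt0 //.
  rewrite subr_le0 -Hbk ler_pM2l //; exact: ltW.
rewrite Hq /vfun -/k (lt_geF rk) !add0r; case: ifP => sk.
  have A := I1 k s (lexx k); rewrite Hbk subrr mul0r !add0r in A.
  have E := I2 0 r; rewrite !add0r mulr0 oppr0 mul0r -v12 in E.
  have P2 : 0 <= b ^+ 2 / (2%:R * (b + c)) * (s - k) ^+ 2.
    by apply: mulr_ge0 => //; apply: sqr_ge0.
  lra.
have := I2 0 s; have := I2 0 r; rewrite !add0r mulr0 oppr0 !mul0r; lra.
Qed.


Lemma gne_from (R : rcfType) (n l : nat) (H : 'M[R]_(l, n)) (f : 'cV[R]_l)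
  (a b c : 'I_n -> R) (piM : 'cV[R]_n -> 'cV[R]_n -> R) (xs : 'rV[R]_n) :
  (forall k, 0 < a k) -> (forall k, 0 <= b k) -> (forall k, 0 < c k) ->
  Tset H f (fun k => thv (a k) (b k) (c k)) xs ->
  (forall r', SM H f (\col_k BR (a k) (b k) (c k) (xs 0 k)) r' ->
     Tset H f (fun k => thv (a k) (b k) (c k)) (\row_k r' k 0) ->
     piM (\col_k BR (a k) (b k) (c k) (xs 0 k)) r' <=
     piM (\col_k BR (a k) (b k) (c k) (xs 0 k)) (\col_k xs 0 k)) ->
  GNE H f a b c piM (\col_k BR (a k) (b k) (c k) (xs 0 k)) (\col_k xs 0 k).
Proof.
move=> Ha Hb Hc [Hth Hs Hf] HM.
have HSM : SM H f (\col_k BR (a k) (b k) (c k) (xs 0 k)) (\col_k xs 0 k).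
  split.
  - by move=> k; rewrite !mxE; apply: BR_pos.
  - move=> e; rewrite mxE; under eq_bigr do rewrite mxE; exact: Hf.
  - by under eq_bigr do rewrite mxE.
split=> //.
- by move=> k; rewrite mxE; apply: BR_ge0.
- move=> k x x0; rewrite /profitG /price /upd !mxE eqxx.
  exact: BR_best.
- move=> r' Hr'; apply: HM => //.
  case: Hr' => Hp Hfl Hsum; split.
  - move=> k; rewrite mxE; have := Hp k; rewrite mxE => Hk.
    have := BR_th (Ha k) (Hb k) (Hc k) (Hth k); lra.
  - by under eq_bigr do rewrite mxE.
  - move=> e; rewrite (eq_bigr (fun j => H e j * r' j 0)); last by move=> j _; rewrite mxE.
    by have := Hfl e; rewrite mxE.
Qed.

Lemma thv_le0 (K : realFieldType) (a b c : K) : 0 < a -> 0 <= b -> 0 < c -> thv a b c <= 0.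
Proof. move=> a0 b0 c0; rewrite /thv oppr_le0 divr_ge0 //; lra. Qed.

Lemma row_col (R : rcfType) (n : nat) (xs : 'rV[R]_n) : \row_k (\col_k xs 0 k) k 0 = xs.
Proof. by apply/rowP => k; rewrite !mxE. Qed.

Lemma Wres_id (R : rcfType) (n : nat) (a b c : 'I_n -> R) (q r : 'cV[R]_n) :
  W_res a b c q r = sepq a b (fun _ => 0) (\row_k r k 0) + \sum_k b k * q k 0 ^+ 2 / 2%:R.
Proof.
rewrite /W_res /sepq -big_split /=; apply: eq_bigr => k _.
by rewrite /int_price /price mxE; field.
Qed.

Lemma part2 (R : rcfType) (n l : nat) (H : 'M[R]_(l, n)) (f : 'cV[R]_l)
  (a b c : 'I_n -> R) :
  (forall e, 0 <= f e 0) ->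
  (forall k, 0 < a k) -> (forall k, 0 <= b k) -> (forall k, 0 < c k) ->
  exists q r, GNE H f a b c (W_res a b c) q r.
Proof.
move=> Hf Ha Hb Hc.
have th0 k : thv (a k) (b k) (c k) <= 0 by apply: thv_le0.
have HV : forall (s : {ffun 'I_n -> bool}) (x : 'rV[R]_n), Piece (fun _ => 0) s x ->
  sepq a b (fun _ => 0) x =
  sepq (fun k => if s k then a k else a k) (fun k => if s k then b k else b k)
       (fun k => if s k then 0 else 0) x.
  by move=> s x _; apply: eq_bigr => k _; case: (s k).
have [xs [Txs Mx]] := @T_max R n l H f (fun k => thv (a k) (b k) (c k)) (fun _ => 0)
   a b (fun _ => 0) a b (fun _ => 0) (sepq a b (fun _ => 0)) th0 Hf Hb Hb HV.
exists (\col_k BR (a k) (b k) (c k) (xs 0 k)), (\col_k xs 0 k).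
apply: gne_from => // r' _ Tr'.
rewrite !Wres_id row_col; have := Mx _ Tr'; lra.
Qed.

Lemma part1 (R : rcfType) (n l : nat) (H : 'M[R]_(l, n)) (f : 'cV[R]_l)
  (a b c : 'I_n -> R) :
  (forall e, 0 <= f e 0) ->
  (forall k, 0 < a k) -> (forall k, 0 <= b k) -> (forall k, 0 < c k) ->
  exists q r, GNE H f a b c (W_soc a b c) q r.
Proof.
move=> Hf Ha Hb Hc.
have th0 k : thv (a k) (b k) (c k) <= 0 by apply: thv_le0.
pose V (x : 'rV[R]_n) := \sum_k vfun (a k) (b k) (c k) (x 0 k).
have Hb1 k : 0 <= be1 (a k) (b k) (c k).
  rewrite /be1; apply: divr_ge0; last by have := Hc k; have := Hb k; lra.
  by apply: mulr_ge0 => //; have := Hc k; have := Hb k; lra.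
have HV : forall (s : {ffun 'I_n -> bool}) (x : 'rV[R]_n),
  Piece (fun k => kap (a k) (b k)) s x ->
  V x = sepq (fun k => if s k then a k else al1 (a k) (b k) (c k))
             (fun k => if s k then b k else be1 (a k) (b k) (c k))
             (fun k => if s k then ga2 (a k) (b k) (c k) else 0) x.
  move=> s x Hp; apply: eq_bigr => k _; have := Hp k; rewrite /vfun.
  case: (s k) => Hk.
    case: ifP => Hx.
      have -> : x 0 k = kap (a k) (b k) by apply/eqP; rewrite eq_le Hx Hk.
      by rewrite v12.
    by [].
  by rewrite Hk.
have [xs [Txs Mx]] := @T_max R n l H f (fun k => thv (a k) (b k) (c k))
   (fun k => kap (a k) (b k))
   (fun k => al1 (a k) (b k) (c k)) (fun k => be1 (a k) (b k) (c k)) (fun _ => 0)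
   a b (fun k => ga2 (a k) (b k) (c k)) V th0 Hf Hb1 Hb HV.
exists (\col_k BR (a k) (b k) (c k) (xs 0 k)), (\col_k xs 0 k).
apply: gne_from => // r' _ Tr'.
have HM := Mx _ Tr'.
set q := \col_k BR (a k) (b k) (c k) (xs 0 k).
have E (rr : 'cV[R]_n) : W_soc a b c q rr =
   \sum_k (uf (a k) (b k) (q k 0 + rr k 0) - vfun (a k) (b k) (c k) (rr k 0))
   + V (\row_k rr k 0) - \sum_k c k * q k 0 ^+ 2.
  rewrite /W_soc /V -big_split -sumrB /=; apply: eq_bigr => k _.
  rewrite /int_price /uf mxE; ring.
rewrite !E row_col.
have Hk : \sum_k (uf (a k) (b k) (q k 0 + r' k 0) - vfun (a k) (b k) (c k) (r' k 0)) <=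
          \sum_k (uf (a k) (b k) (q k 0 + (\col_k xs 0 k) k 0) -
                  vfun (a k) (b k) (c k) ((\col_k xs 0 k) k 0)).
  apply: ler_sum => k _; rewrite !mxE; exact: key.
lra.
Qed.


Lemma sum2 (R : zmodType) (F : 'I_2 -> R) : \sum_(k < 2) F k = F 0 + F 1.
Proof. by rewrite !big_ord_recl big_ord0 addr0; congr (F _ + F _); apply: val_inj. Qed.

Lemma sum1 (R : zmodType) (F : 'I_1 -> R) : \sum_(k < 1) F k = F 0.
Proof. by rewrite big_ord_recl big_ord0 addr0; congr (F _); apply: val_inj. Qed.

Lemma shift12 (R : rcfType) (H : 'M[R]_(1, 2)) : is_shift_factor H ->
  forall r : 'cV[R]_2, \sum_k r k 0 = 0 -> exists j, (H *m r) 0 0 = r j 0.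
Proof.
move=> [fr [to [beta [s [Hft Hbeta Hcon Hcol]]]]] r Hr.
have HH k : H 0 k = (fr 0 == k)%:R - (fr 0 == s)%:R.
  have [th [_ HL Hc]] := Hcol k.
  have E1 : H 0 k = (branch_mx fr to beta *m th) 0 0.
    by move/matrixP: Hc => /(_ 0 0); rewrite !mxE.
  have := congr1 (fun M : 'M[R]_(2, 1) => M (fr 0) 0) HL.
  rewrite /laplacian -mulmxA mxE sum1 !mxE eqxx.
  have -> : (fr 0 == to 0) = false by apply/negbTE; apply: Hft.
  by rewrite subr0 mul1r => <-; rewrite E1 mxE.
exists (fr 0).
rewrite mxE (eq_bigr (fun k => (fr 0 == k)%:R * r k 0 - (fr 0 == s)%:R * r k 0));
  last by move=> k _; rewrite HH mulrBl.
rewrite sumrB -mulr_sumr Hr mulr0 subr0 (bigD1 (fr 0)) //= eqxx mul1r.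
by rewrite big1 ?addr0 // => k /negbTE; rewrite eq_sym => ->; rewrite mul0r.
Qed.

Lemma t2 (R : rcfType) (r : 'cV[R]_2) : \sum_k r k 0 = 0 -> r 0 0 + r 1 0 = 0.
Proof. by rewrite sum2. Qed.

Lemma rho2 (R : rcfType) (rho : R) :
  -2 <= rho <= 2 ->
  6 / 5 * ((50 - 6 * rho) / 22 + 2) ^+ 2 / 2 + ((10 + rho) / 4 - 2) ^+ 2 / 2 <=
  6 / 5 * ((50 - 6 * rho) / 22 + rho) ^+ 2 / 2 + ((10 + rho) / 4 - rho) ^+ 2 / 2 ->
  rho = 2.
Proof.
move=> /andP [r1 r2] H1.
have E1 : 6 / 5 * ((50 - 6 * rho) / 22 + rho) ^+ 2 / 2 + ((10 + rho) / 4 - rho) ^+ 2 / 2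
   - (6 / 5 * ((50 - 6 * rho) / 22 + 2) ^+ 2 / 2 + ((10 + rho) / 4 - 2) ^+ 2 / 2)
   = (rho - 2) * (23 / 44 * rho + 267 / 110) :> R by field.
have : 0 <= (rho - 2) * (23 / 44 * rho + 267 / 110) by rewrite -E1; lra.
nra.
Qed.

Lemma fin2 (R : rcfType) :
  ~ (6 / 5 * ((50 - 6 * 2) / 22 - (50 - 6 * 2) / 22) ^+ 2 / 2 +
     ((10 + 2) / 4 + (50 - 6 * 2) / 22) ^+ 2 / 2 <=
     6 / 5 * ((50 - 6 * 2) / 22 + 2) ^+ 2 / 2 + ((10 + 2) / 4 - 2) ^+ 2 / 2 :> R).
Proof. lra. Qed.

Lemma Wcon_id (R : rcfType) (n : nat) (a b c : 'I_n -> R) (q r : 'cV[R]_n) :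
  W_con a b c q r = \sum_k b k * (q k 0 + r k 0) ^+ 2 / 2.
Proof. apply: eq_bigr => k _; rewrite /int_price /price; by field. Qed.

Definition b3 (R : rcfType) : 'I_2 -> R := fun k => if k == ord0 then 6%:R / 5%:R else 1.

Lemma b30 (R : rcfType) : b3 R 0 = 6 / 5.
Proof. by []. Qed.
Lemma b31 (R : rcfType) : b3 R 1 = 1.
Proof. by []. Qed.

Lemma shift_exists (R : rcfType) : exists H : 'M[R]_(1, 2), is_shift_factor H.
Proof.
pose fr := fun _ : 'I_1 => (0 : 'I_2).
pose to := fun _ : 'I_1 => (1 : 'I_2).
exists (\matrix_(e < 1, k < 2) (if k == 0 then 0 else -1)).
exists fr, to, (fun _ => 1), 0; split.
- by [].
- by move=> _; apply: ltr01.
- have A : adj fr to 0 1 by apply/existsP; exists 0; rewrite /fr /to !eqxx.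
  have B : adj fr to 1 0 by apply/existsP; exists 0; rewrite /fr /to !eqxx orbT.
  move=> i j.
  have Hi : (i == 0) || (i == 1) by case: i => [[|[|m]] Hm].
  have Hj : (j == 0) || (j == 1) by case: j => [[|[|m]] Hm].
  case/orP: Hi => /eqP ->; case/orP: Hj => /eqP ->; rewrite ?connect0 //; exact: connect1.
- move=> k.
  have Hk : (k == 0) || (k == 1) by case: k => [[|[|m]] Hm].
  case/orP: Hk => /eqP ->.
    exists 0; split; first by rewrite mxE.
      by rewrite mulmx0; apply/matrixP => i j; rewrite !mxE subrr.
    by rewrite mulmx0; apply/matrixP => i j; rewrite !mxE.
  exists (\col_i (if i == 0 then 0 else 1)); split; first by rewrite mxE.
    apply/matrixP => i j; rewrite /laplacian /branch_mx /incidence /unit_inj.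
    rewrite !mxE !big_ord_recl !big_ord0 !mxE !big_ord_recl !big_ord0 !mxE.
    have Hi : (i == 0) || (i == 1) by case: i => [[|[|m]] Hm].
    by case/orP: Hi => /eqP ->; rewrite /fr /to /=; lra.
  apply/matrixP => i j; rewrite !ord1 /branch_mx /incidence.
  by rewrite !mxE !big_ord_recl !big_ord0 !mxE /fr /to /=; lra.
Qed.

Lemma part3 (R : rcfType) (H : 'M[R]_(1, 2)) :
  let f : 'cV[R]_1 := \col_(e < 1) 2%:R in
  let a : 'I_2 -> R := fun _ => 10%:R in
  let b : 'I_2 -> R := fun k => if k == ord0 then 6%:R / 5%:R else 1 in
  let c : 'I_2 -> R := fun _ => 1 in
  is_shift_factor H ->
  feasible H f /\ ~ exists q r, GNE H f a b c (W_con a b c) q r.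
Proof.
move=> f a b c HS.
have Hflow (r' : 'cV[R]_2) : \sum_k r' k 0 = 0 -> `|(H *m r') 0 0| = `|r' 0 0|.
  move=> Hsum; have E := t2 Hsum.
  case: (shift12 HS Hsum) => j ->.
  have Hj : (j == 0) || (j == 1) by case: j => [[|[|m]] Hm].
  case/orP: Hj => /eqP -> //.
  have -> : r' 1 0 = - r' 0 0 by lra.
  by rewrite normrN.
have f0 e : f e 0 = 2 by rewrite mxE.
have b0 : b 0 = 6 / 5 by [].
have b1 : b 1 = 1 by [].
have I2 (k : 'I_2) : (k == 0) || (k == 1) by case: k => [[|[|m]] Hm].
split.
  exists 0; split; first by move=> k; rewrite mxE.
  exists 0; split.
  - by move=> k; rewrite !mxE addr0.
  - by move=> e; rewrite mulmx0 mxE normr0 f0; lra.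
  - by apply: big1 => k _; rewrite mxE.
move=> [q [r [Hq [Hp Hfl Hs] Hg HM]]].
have Hs2 := t2 Hs.
have Hrho : -2 <= r 0 0 <= 2.
  by have := Hfl 0; rewrite Hflow // f0 ler_norml.
have r10 : r 1 0 = - r 0 0 by lra.
have Hq0 : q 0 0 = (50 - 6 * r 0 0) / 22.
  have x0 : 0 <= (50 - 6 * r 0 0) / 22 by case/andP: Hrho => _ ?; lra.
  have := Hg 0 _ x0; rewrite /profitG /price /upd !mxE eqxx /= b0.
  set x := (50 - 6 * r 0 0) / 22 => G.
  have E : x * (a 0 - 6 / 5 * (x + r 0 0)) - c 0 * x ^+ 2 -
           (q 0 0 * (a 0 - 6 / 5 * (q 0 0 + r 0 0)) - c 0 * q 0 0 ^+ 2)
           = 11 / 5 * (q 0 0 - x) ^+ 2 by rewrite /x /a /c; field.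
  have : (q 0 0 - x) ^+ 2 = 0 by have := sqr_ge0 (q 0 0 - x); lra.
  by move/eqP; rewrite sqrf_eq0 subr_eq0 => /eqP.
have Hq1 : q 1 0 = (10 + r 0 0) / 4.
  have x0 : 0 <= (10 + r 0 0) / 4 by case/andP: Hrho => ? _; lra.
  have := Hg 1 _ x0; rewrite /profitG /price /upd !mxE eqxx /= b1 r10.
  set x := (10 + r 0 0) / 4 => G.
  have E : x * (a 1 - 1 * (x + - r 0 0)) - c 1 * x ^+ 2 -
           (q 1 0 * (a 1 - 1 * (q 1 0 + - r 0 0)) - c 1 * q 1 0 ^+ 2)
           = 2 * (q 1 0 - x) ^+ 2 by rewrite /x /a /c; field.
  have : (q 1 0 - x) ^+ 2 = 0 by have := sqr_ge0 (q 1 0 - x); lra.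
  by move/eqP; rewrite sqrf_eq0 subr_eq0 => /eqP.
pose r2 : 'cV[R]_2 := \col_i (if i == 0 then 2 else -2).
have Hs2' : \sum_k r2 k 0 = 0 by rewrite sum2 !mxE /=; lra.
have Sr2 : SM H f q r2.
  split => //.
  - move=> k; rewrite !mxE; case/orP: (I2 k) => /eqP -> /=.
      by rewrite Hq0; case/andP: Hrho => _ ?; lra.
    by rewrite Hq1; case/andP: Hrho => ? _; lra.
  - by move=> e; rewrite ord1 Hflow // mxE /= f0 ger0_norm //; lra.
have W1 := HM r2 Sr2; rewrite !Wcon_id !sum2 !mxE b0 b1 /= in W1.
have Erho : r 0 0 = 2.
  apply: rho2 => //; move: W1; rewrite Hq0 Hq1 r10; lra.
pose r3 : 'cV[R]_2 := \col_i (if i == 0 then - q 0 0 else q 0 0).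
have Hs3 : \sum_k r3 k 0 = 0 by rewrite sum2 !mxE /=; lra.
have Sr3 : SM H f q r3.
  split => //.
  - move=> k; rewrite !mxE; case/orP: (I2 k) => /eqP -> /=.
      by rewrite subrr.
    by rewrite Hq0 Hq1 Erho; lra.
  - by move=> e; rewrite ord1 Hflow // mxE /= f0 normrN Hq0 Erho ger0_norm; lra.
have W2 := HM r3 Sr3; rewrite !Wcon_id !sum2 !mxE b0 b1 /= in W2.
apply: (@fin2 R); move: W2; rewrite r10 Hq0 Hq1 Erho; lra.
Qed.


Theorem theorem1 (R : rcfType) :
  (* (i) social welfare: a GNE exists *)
  (forall (n l : nat) (H : 'M[R]_(l, n)) (f : 'cV[R]_l) (a b c : 'I_n -> R),
     is_shift_factor H -> (forall e, 0 <= f e 0) ->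
     (forall k, 0 < a k) -> (forall k, 0 <= b k) -> (forall k, 0 < c k) ->
     feasible H f ->
     exists q r, GNE H f a b c (W_soc a b c) q r) /\
  (* (ii) residual welfare: a GNE exists *)
  (forall (n l : nat) (H : 'M[R]_(l, n)) (f : 'cV[R]_l) (a b c : 'I_n -> R),
     is_shift_factor H -> (forall e, 0 <= f e 0) ->
     (forall k, 0 < a k) -> (forall k, 0 <= b k) -> (forall k, 0 < c k) ->
     feasible H f ->
     exists q r, GNE H f a b c (W_res a b c) q r) /\
  (* (iii) consumer welfare: on the 2-node network with a = (10,10),
     b = (1.2, 1), c = (1,1), f12 = 2, the (feasible) game has no GNE *)
  ((exists H : 'M[R]_(1, 2), is_shift_factor H) /\
   forall H : 'M[R]_(1, 2),
     let f : 'cV[R]_1 := \col_(e < 1) 2%:R in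
     let a : 'I_2 -> R := fun _ => 10%:R in
     let b : 'I_2 -> R := fun k => if k == ord0 then 6%:R / 5%:R else 1 in
     let c : 'I_2 -> R := fun _ => 1 in
     is_shift_factor H ->
     feasible H f /\ ~ exists q r, GNE H f a b c (W_con a b c) q r).

Proof.
split; [|split].
- by move=> n l H f a b c _ Hf Ha Hb Hc _; apply: part1.
- by move=> n l H f a b c _ Hf Ha Hb Hc _; apply: part2.
- split; first exact: shift_exists.
  by move=> H; apply: part3.
Qed.
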